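(* Let $f(x)$ be a formal power series with zero constant term and positive coefficient of $x$. If the power series $x/f(x)=\sum_{n\ge0}c_nx^n$ is alternating, i.e. $(-1)^nc_n\ge0$ for all $n\ge0$, then the compositional inverse $f^{-1}(x)=\sum_{n\ge1}e_nx^n$ satisfies $(-1)^{n-1}e_n\ge0$ for all $n\ge1$.
   Context: The compositional inverse $f^{-1}(x)$ is the unique power series with zero constant term satisfying $f(f^{-1}(x))=f^{-1}(f(x))=x$. *)

(* Defs.v *)
(* Formal power series over a real field R are represented
   by their coefficient functions nat -> R (coefficient of x^n at index n). *)
From HB Require Import structures.
From mathcomp Require Import all_boot all_order all_algebra.
Set Implicit Arguments. Unset Strict Implicit. Unset Printing Implicit Defensive.
Import Order.TTheory GRing.Theory Num.Theory.
Local Open Scope ring_scope.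

Section FPS.
Variable R : comNzRingType.

Definition fps_one : nat -> R := fun n => (n == 0%N)%:R.
Definition fps_X : nat -> R := fun n => (n == 1%N)%:R.

Definition fps_mul (f g : nat -> R) : nat -> R :=
  fun n => \sum_(i < n.+1) f i * g (n - i)%N.

Fixpoint fps_pow (f : nat -> R) (k : nat) : nat -> R :=
  match k with
  | 0%N => fps_one
  | k'.+1 => fps_mul f (fps_pow f k')
  end.

(* composition f(g(x)), meaningful when g has zero constant term
   (then g^k has order >= k, so only k <= n contribute to coefficient n) *)
Definition fps_comp (f g : nat -> R) : nat -> R :=
  fun n => \sum_(k < n.+1) f k * fps_pow g k n.
End FPS.

(* Main.v *)
Require Import Defs.
From HB Require Import structures.
From mathcomp Require Import all_boot all_order all_algebra.
From mathcomp Require Import zify.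
Import Order.TTheory GRing.Theory Num.Theory.
Set Implicit Arguments. Unset Strict Implicit.
Local Open Scope ring_scope.

Section Aux.
Variable R : comNzRingType.

Lemma pow_low (e : nat -> R) : e 0%N = 0 ->
  forall k m, (m < k)%N -> fps_pow e k m = 0.
Proof.
move=> e0; elim=> [|k IH] m //= Hm.
rewrite /fps_mul big1 // => [[i Hi]] _ /=.
case: i Hi => [|i] Hi; first by rewrite e0 mul0r.
rewrite IH ?mulr0 //; rewrite ltnS in Hm Hi; lia.
Qed.

Definition tr N (f : nat -> R) : {poly R} := \poly_(i < N.+1) f i.

Lemma coef_tr N f m : (m <= N)%N -> (tr N f)`_m = f m.
Proof. by move=> H; rewrite coef_poly ltnS H. Qed.

Lemma pow_tr N g k m : (m <= N)%N -> ((tr N g) ^+ k)`_m = fps_pow g k m.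
Proof.
elim: k m => [|k IH] m Hm /=; first by rewrite expr0 coef1.
rewrite exprS coefM /fps_mul; apply: eq_bigr => [[i Hi]] _ /=.
rewrite coef_tr ?IH //; rewrite ltnS in Hi; lia.
Qed.

Lemma mul_tr N f g m : (m <= N)%N -> (tr N f * tr N g)`_m = fps_mul f g m.
Proof.
move=> Hm; rewrite coefM /fps_mul; apply: eq_bigr => [[i Hi]] _ /=.
rewrite !coef_tr //; rewrite ltnS in Hi; lia.
Qed.

Lemma comp_tr N f e m : e 0%N = 0 -> (m <= N)%N ->
  (tr N f \Po tr N e)`_m = fps_comp f e m.
Proof.
move=> e0 Hm; set E := tr N e; rewrite /tr poly_def.
rewrite (@linear_sum _ _ _ _ (comp_poly E)).
rewrite coef_sum /fps_comp.
under eq_bigr => i _ do rewrite /= comp_polyZ comp_Xn_poly coefZ pow_tr //.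
rewrite -(big_mkord xpredT (fun i => f i * fps_pow e i m)).
rewrite -(big_mkord xpredT (fun i => f i * fps_pow e i m)).
rewrite (big_cat_nat _ (n:=m.+1)) //=.
rewrite [X in _ + X]big1_seq ?addr0 // => i /andP[_]; rewrite mem_index_iota => /andP[H1 _].
by rewrite pow_low ?mulr0.
Qed.

Definition agree N (P Q : {poly R}) := forall m, (m <= N)%N -> P`_m = Q`_m.

Lemma agree_mul N P P' Q Q' : agree N P P' -> agree N Q Q' -> agree N (P * Q) (P' * Q').
Proof.
move=> HP HQ m Hm; rewrite !coefM; apply: eq_bigr => [[i Hi]] _ /=.
rewrite HP ?HQ //; rewrite ltnS in Hi; lia.
Qed.

Lemma agree_comp N (P Q E : {poly R}) : E`_0 = 0 -> agree N P Q -> agree N (P \Po E) (Q \Po E).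
Proof.
move=> E0 HPQ m Hm; apply/eqP; rewrite -subr_eq0 -coefB -comp_polyB.
set D := P - Q.
have hD : take_poly N.+1 D = 0.
  apply/polyP => i; rewrite coef_take_poly coef0; case: ifP => // Hi.
  by rewrite coefB HPQ ?subrr.
have hE : take_poly 1 E = 0.
  apply/polyP => i; rewrite coef_take_poly coef0; case: ifP => //; case: i => //.
rewrite -(poly_take_drop N.+1 D) hD add0r comp_polyM comp_Xn_poly.
rewrite -(poly_take_drop 1 E) hE add0r exprMn -exprM mul1n.
by rewrite mulrA mulrC coefXnM ltnS Hm.
Qed.

End Aux.

Lemma m1sq (R : comNzRingType) : (-1) ^+ 2 = 1 :> R.
Proof. by rewrite expr2 mulrNN mulr1. Qed.

Lemma key (R : realFieldType) (f c e : nat -> R)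
  (hc : fps_mul f c = fps_X R) (he0 : e 0%N = 0)
  (hfe : fps_comp f e = fps_X R) n :
  (1 <= n)%N -> e n = fps_comp c e n.-1.
Proof.
move=> Hn.
set E := tr n e.
have E0 : E`_0 = 0 by rewrite /E coef_tr.
have A1 : agree n (tr n f * tr n c) 'X.
  by move=> m Hm; rewrite mul_tr // hc /fps_X coefX.
have A2 := agree_comp E0 A1; rewrite comp_polyX comp_polyM in A2.
have A3 : agree n (tr n f \Po E) 'X.
  by move=> m Hm; rewrite comp_tr // hfe /fps_X coefX.
have A4 : agree n ((tr n f \Po E) * (tr n c \Po E)) ('X * (tr n c \Po E)).
  by apply: agree_mul => // m _.
rewrite -(coef_tr e (leqnn n)) -/E -A2 // A4 // coefXM.
have -> : (n == 0%N) = false by case: (n) Hn.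
by rewrite comp_tr // leq_pred.
Qed.

Lemma pow_sign (R : realFieldType) (e : nat -> R) n : e 0%N = 0 ->
  (forall j, (1 <= j)%N -> (j < n)%N -> 0 <= (-1) ^+ j.-1 * e j) ->
  forall k m, (m < n)%N -> 0 <= (-1) ^+ (m + k) * fps_pow e k m.
Proof.
move=> e0 H; elim=> [|k IH] m Hm /=.
  by rewrite /fps_one; case: m Hm => [|m] _; rewrite ?mulr1 ?mulr0 ?expr0 ?mulr1.
rewrite /fps_mul mulr_sumr; apply: sumr_ge0 => [[i Hi]] _ /=.
case: i Hi => [|i] Hi; first by rewrite e0 mul0r mulr0.
have -> : (m + k.+1 = i + (m - i.+1 + k) + 2)%N by rewrite ltnS in Hi; lia.
rewrite !exprD m1sq mulr1 mulrACA; apply: mulr_ge0.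
  by apply: (H i.+1) => //; rewrite ltnS in Hi; lia.
by rewrite -exprD; apply: IH; lia.
Qed.

Theorem claim6p1 (R : realFieldType) (f c e : nat -> R)
  (hf0 : f 0%N = 0) (hf1 : 0 < f 1%N)
  (hc : fps_mul f c = fps_X R)
  (halt : forall n : nat, 0 <= (-1) ^+ n * c n)
  (he0 : e 0%N = 0)
  (hfe : fps_comp f e = fps_X R)
  (hef : fps_comp e f = fps_X R) :
  forall n : nat, (1 <= n)%N -> 0 <= (-1) ^+ n.-1 * e n.
Proof.
suff H : forall n j, (1 <= j)%N -> (j < n)%N -> 0 <= (-1) ^+ j.-1 * e j.
  by move=> n Hn; apply: (H n.+1).
elim=> [|n IH] j Hj // Hjn.
rewrite ltnS leq_eqVlt in Hjn; case/orP: Hjn => [/eqP Ej | Hjn]; last exact: IH.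
subst n.
rewrite (key hc he0 hfe Hj) /fps_comp mulr_sumr; apply: sumr_ge0 => [[k Hk]] _ /=.
have -> : (-1) ^+ j.-1 = (-1) ^+ k * (-1) ^+ (j.-1 + k) :> R.
  rewrite -exprD.
  have -> : (k + (j.-1 + k) = j.-1 + 2 * k)%N by lia.
  by rewrite exprD exprM m1sq expr1n mulr1.
rewrite mulrACA; apply: mulr_ge0 => //.
apply: (pow_sign he0 IH).
rewrite ltnS in Hk; lia.
Qed.
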